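(* Let $n\ge2$, $N\ge2n+1$, $\alpha_2,\dots,\alpha_n$ real, $\alpha_1=1$. Consider the closed ($k=1$) $N$-dimensional metric $ds^2=-dt^2+a(t)^2\left(\frac{dr^2}{1-r^2}+r^2d\Omega_{N-2}^2\right)$ and the pressure component of the Lovelock field equations with $p=0$, namely $$-(N-2)\left(\frac{N-3}{2}\Big(\frac{\dot a^2}{a^2}+\frac{1}{a^2}\Big)+\frac{\ddot a}{a}\right)+\sum_{i=2}^{n}\alpha_i\left[{}^{(i)}k_{11}\Big(\frac{\dot a^2}{a^2}+\frac{1}{a^2}\Big)^i+{}^{(i)}k_{12}\,\frac{\ddot a}{a}\Big(\frac{\dot a^2}{a^2}+\frac{1}{a^2}\Big)^{i-1}\right]=0 .$$ Let $C_1>0$ be a positive real root of $2-N+\sum_{i=2}^n\alpha_i\,{}^{(i)}k_{12}\,\frac{C_1^{i-1}}{i}=0$. Then $$a(t)=\frac{1}{\sqrt{C_1}}\cosh\big(\sqrt{C_1}\,t\big)$$ is a solution of this pressure-free equation.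
   Context: Dots denote $d/dt$ ($t$ cosmic time). This equation is the spatial ($p$) component of the Lovelock field equations $\sum_i\alpha_i\,{}^{(i)}\mathcal{H}^a_{\ b}=T^a_{\ b}$ for a perfect fluid in the FRW metric. Coefficients (binomial coefficients $\binom{a}{b}$, zero when $b<0$): ${}^{(i)}k_{11}=-\tfrac12(2(i-1))!\,(N-2)(N-1-2i)\binom{N-3}{2(i-1)}$, ${}^{(i)}k_{12}=-\tfrac12(2(i-1))!\left[2(N-i-1)\binom{N-2}{2(i-1)}+(N-2)(N-1-2i)\binom{N-3}{2i-3}\right]$. *)

(* Defs.v *)
From Stdlib Require Import Reals Arith Factorial.
From Coquelicot Require Import Coquelicot.
Open Scope R_scope.

Fixpoint binom (a b : nat) : nat :=
  match a, b with
  | _, O => 1%nat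
  | O, S _ => 0%nat
  | S a', S b' => (binom a' b' + binom a' (S b'))%nat
  end.

Definition k11 (N i : nat) : R :=
  - / 2 * INR (fact (2 * (i - 1))) * (INR N - 2) * (INR N - 1 - 2 * INR i)
    * INR (binom (N - 3) (2 * (i - 1))).

(* (i)k_12 = -1/2 (2(i-1))! [2(N-i-1) C(N-2,2(i-1)) + (N-2)(N-1-2i) C(N-3,2i-3)]
   (used only for i >= 2, where 2i-3 >= 1, so nat subtraction is exact) *)
Definition k12 (N i : nat) : R :=
  - / 2 * INR (fact (2 * (i - 1))) *
    (2 * (INR N - INR i - 1) * INR (binom (N - 2) (2 * (i - 1)))
     + (INR N - 2) * (INR N - 1 - 2 * INR i) * INR (binom (N - 3) (2 * i - 3))).

(* Left-hand side of the pressure (p) component of the Lovelock equations,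
   k = 1, alpha_1 = 1, evaluated at time t. *)
Definition pressure_lhs (N n : nat) (alpha : nat -> R) (a : R -> R) (t : R) : R :=
  let ad := Derive a t in
  let add := Derive (Derive a) t in
  let H := ad ^ 2 / a t ^ 2 + 1 / a t ^ 2 in
  - (INR N - 2) * ((INR N - 3) / 2 * H + add / a t)
  + sum_n_m (fun i => alpha i * (k11 N i * H ^ i + k12 N i * (add / a t) * H ^ (i - 1)))
      2 n.

(* Main.v *)
Require Import Defs.
From Stdlib Require Import Reals Lra Lia Psatz Arith Factorial FunctionalExtensionality.
From Coquelicot Require Import Coquelicot.
Open Scope R_scope.

Lemma binom_abs (a b : nat) :
  (S b * binom a (S b) = (a - b) * binom a b)%nat.
Proof.
  revert b; induction a as [|a IH]; intros b.
  - simpl. lia.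
  - destruct b as [|b'].
    + assert (B0 : binom a 0 = 1%nat) by (destruct a; reflexivity).
      change (binom (S a) 1) with (binom a 0 + binom a 1)%nat.
      change (binom (S a) 0) with 1%nat.
      specialize (IH 0%nat). rewrite B0 in *. lia.
    + change (binom (S a) (S (S b'))) with (binom a (S b') + binom a (S (S b')))%nat.
      change (binom (S a) (S b')) with (binom a b' + binom a (S b'))%nat.
      pose proof (IH b') as H1. pose proof (IH (S b')) as H2.
      destruct (Nat.le_gt_cases (S b') a).
      * replace (S a - S b')%nat with (a - b')%nat by lia.
        replace (a - b')%nat with (S (a - S b'))%nat in * by lia. nia.
      * assert (binom a (S b') = 0%nat) by (replace (a - b')%nat with 0%nat in H1 by lia; lia).
        replace (a - S b')%nat with 0%nat in H2 by lia.
        replace (S a - S b')%nat with 0%nat by lia. nia.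
Qed.

Lemma term_id (N i : nat) : (2 <= i)%nat -> (2 * i + 1 <= N)%nat ->
  2 * INR i * k11 N i = (INR N - 1 - 2 * INR i) * k12 N i.
Proof.
  intros Hi HN.
  assert (E1 : binom (N - 2) (2 * (i - 1)) =
     (binom (N - 3) (2 * i - 3) + binom (N - 3) (2 * (i - 1)))%nat).
  { replace (N - 2)%nat with (S (N - 3)) by lia.
    replace (2 * (i - 1))%nat with (S (2 * i - 3)) by lia. reflexivity. }
  assert (E2 : (S (2 * i - 3) * binom (N - 3) (2 * (i - 1)) =
                 (N - 2 * i) * binom (N - 3) (2 * i - 3))%nat).
  { replace (2 * (i - 1))%nat with (S (2 * i - 3)) by lia.
    rewrite binom_abs. f_equal. lia. }
  apply (f_equal INR) in E1. apply (f_equal INR) in E2.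
  rewrite plus_INR in E1. rewrite !mult_INR in E2.
  replace (INR (S (2 * i - 3))) with (2 * INR i - 2) in E2
    by (rewrite S_INR, minus_INR by lia; rewrite mult_INR; simpl; lra).
  rewrite minus_INR in E2 by lia. rewrite mult_INR in E2. replace (INR 2) with 2 in E2 by (simpl; lra).
  unfold k11, k12. rewrite E1.
  set (c := INR (binom (N - 3) (2 * (i - 1)))) in *.
  set (d := INR (binom (N - 3) (2 * i - 3))) in *.
  set (F := INR (fact (2 * (i - 1)))).
  assert (2 * INR i * (- / 2 * F * (INR N - 2) * (INR N - 1 - 2 * INR i) * c) -
    (INR N - 1 - 2 * INR i) *
    (- / 2 * F * (2 * (INR N - INR i - 1) * (d + c) +
       (INR N - 2) * (INR N - 1 - 2 * INR i) * d)) =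
    - / 2 * F * (INR N - 1 - 2 * INR i) * (INR N - 1) *
      ((2 * INR i - 2) * c - (INR N - 2 * INR i) * d)) by ring.
  rewrite E2 in H. lra.
Qed.

Lemma cosh_sinh_sq x : cosh x ^ 2 - sinh x ^ 2 = 1.
Proof.
  unfold cosh, sinh. assert (exp x * exp (- x) = 1).
  { rewrite <- exp_plus. replace (x + - x) with 0 by ring. apply exp_0. }
  nra.
Qed.

Lemma cosh_pos x : 0 < cosh x.
Proof. unfold cosh. pose proof (exp_pos x). pose proof (exp_pos (-x)). lra. Qed.

Theorem mainTheorem5 (n N : nat) (alpha : nat -> R) (C1 : R) :
  (2 <= n)%nat -> (2 * n + 1 <= N)%nat ->
  0 < C1 ->
  2 - INR N + sum_n_m (fun i => alpha i * k12 N i * C1 ^ (i - 1) / INR i) 2 n = 0 ->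
  let a := fun t : R => / sqrt C1 * cosh (sqrt C1 * t) in
  forall t : R,
    ex_derive a t /\ ex_derive (Derive a) t /\ pressure_lhs N n alpha a t = 0.
Proof.
  intros Hn HN HC Hsum a t.
  set (s := sqrt C1).
  assert (Hs : 0 < s) by (apply sqrt_lt_R0; lra).
  assert (Hs2 : s * s = C1) by (apply sqrt_sqrt; lra).
  assert (D1 : forall u, is_derive a u (sinh (s * u))).
  { intro u. unfold a. fold s.
    assert (G : is_derive (fun x => cosh (s * x)) u (s * sinh (s * u))).
    { apply (is_derive_comp cosh (fun u => s * u) u (sinh (s * u)) s).
      + apply is_derive_Reals. apply derivable_pt_lim_cosh.
      + auto_derive; [exact I|]. ring. }
    apply is_derive_scal with (k := / s) in G.
    replace (sinh (s * u)) with (/ s * (s * sinh (s * u))) by (field; lra).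
    exact G. }
  assert (DA : Derive a = fun u => sinh (s * u)).
  { apply functional_extensionality. intro u. apply is_derive_unique. apply D1. }
  assert (D2 : forall u, is_derive (fun u => sinh (s * u)) u (s * cosh (s * u))).
  { intro u.
    apply (is_derive_comp sinh (fun u => s * u) u (cosh (s * u)) s).
    + apply is_derive_Reals. apply derivable_pt_lim_sinh.
    + auto_derive; [exact I|]. ring. }
  split; [eexists; apply D1|].
  rewrite DA. split; [eexists; apply D2|].
  unfold pressure_lhs.
  rewrite DA. cbv beta.
  replace (Derive (fun u => sinh (s * u)) t) with (s * cosh (s * t)) by (symmetry; apply is_derive_unique; apply D2).
  assert (Ha : a t = / s * cosh (s * t)) by reflexivity.
  rewrite Ha.
  pose proof (cosh_sinh_sq (s * t)) as Hcs. pose proof (cosh_pos (s * t)) as Hc.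
  set (c := cosh (s * t)) in *. set (sh := sinh (s * t)) in *.
  assert (EH : sh ^ 2 / (/ s * c) ^ 2 + 1 / (/ s * c) ^ 2 = C1).
  { assert (Hq : sh ^ 2 + 1 = c ^ 2) by lra.
    replace (sh ^ 2 / (/ s * c) ^ 2 + 1 / (/ s * c) ^ 2) with ((sh ^ 2 + 1) * (s * s) / c ^ 2)
      by (field; lra).
    rewrite Hq, Hs2. field. lra. }
  assert (EA : s * c / (/ s * c) = C1).
  { rewrite <- Hs2. field. lra. }
  rewrite EH, EA.
  rewrite (sum_n_m_ext_loc _ (fun i => mult ((INR N - 1) / 2 * C1)
      (alpha i * k12 N i * C1 ^ (i - 1) / INR i))).
  2:{ intros k Hk. unfold mult; simpl.
      pose proof (term_id N k ltac:(lia) ltac:(lia)) as T.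
      assert (Hk0 : 0 < INR k) by (apply lt_0_INR; lia).
      replace (C1 ^ k) with (C1 * C1 ^ (k - 1))
        by (replace k with (S (k - 1)) at 2 by lia; reflexivity).
      assert (k11 N k = (INR N - 1 - 2 * INR k) * k12 N k / (2 * INR k))
        by (rewrite <- T; field; lra).
      rewrite H. field. lra. }
  rewrite sum_n_m_mult_l. unfold mult; simpl.
  assert (sum_n_m (fun i => alpha i * k12 N i * C1 ^ (i - 1) / INR i) 2 n = INR N - 2) by lra.
  replace (sum_n_m _ 2 n) with (INR N - 2). field.
Qed.
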